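(* (1) If $p$ is a prime with $p\equiv1\pmod6$, then $P_p(3)$ divides $p-1$. (2) If $p$ is a prime with $p\equiv5\pmod6$, then $P_p(3)$ divides $3(p-1)$.
   Context: The Ducci function $D:\mathbb{Z}_p^3\to\mathbb{Z}_p^3$ is $D(x_1,x_2,x_3)=(x_1+x_2,\,x_2+x_3,\,x_3+x_1)$, entries mod $p$. The period $\mathrm{Per}(\mathbf{u})$ is the smallest $k\ge1$ such that $D^{l+k}(\mathbf{u})=D^l(\mathbf{u})$ for some $l\ge0$, and $P_p(3)=\mathrm{Per}(0,0,1)$. *)

(* Defs.v *)
From mathcomp Require Import all_boot.
Set Implicit Arguments. Unset Strict Implicit. Unset Printing Implicit Defensive.

(* Ducci map on Z_p^3, with residues represented as nats reduced mod p. *)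
Definition ducci (p : nat) (u : nat * nat * nat) : nat * nat * nat :=
  let: (x1, x2, x3) := u in
  ((x1 + x2) %% p, (x2 + x3) %% p, (x3 + x1) %% p).

Definition eventual_period (p : nat) (u : nat * nat * nat) (k : nat) : Prop :=
  0 < k /\ exists l, iter (l + k) (ducci p) u = iter l (ducci p) u.

Definition is_Per (p : nat) (u : nat * nat * nat) (k : nat) : Prop :=
  eventual_period p u k /\ forall k', eventual_period p u k' -> k <= k'.

Definition is_P3 (p k : nat) : Prop := is_Per p (0, 0, 1) k.

(* Main.v *)
Require Import Defs.
From mathcomp Require Import all_boot.
From mathcomp Require Import zify.

Definition d0 (u : nat * nat * nat) : nat * nat * nat :=
  let: (x1, x2, x3) := u in (x1 + x2, x2 + x3, x3 + x1).

Definition mod3 (p : nat) (u : nat * nat * nat) : nat * nat * nat :=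
  let: (x1, x2, x3) := u in (x1 %% p, x2 %% p, x3 %% p).

Lemma iter_mod p n u : iter n (ducci p) (mod3 p u) = mod3 p (iter n d0 u).
Proof.
elim: n => [|n IH] //=; rewrite IH.
case: (iter n d0 u) => [[a b] c] /=.
by rewrite !modnDm.
Qed.

Lemma d0_6 x y z : iter 6 d0 (x, y, z) =
  (22*x + 21*y + 21*z, 21*x + 22*y + 21*z, 21*x + 21*y + 22*z).
Proof. rewrite /=; congr (_, _, _); lia. Qed.

Lemma d0_6m m : exists c, iter (6 * m) d0 (0, 0, 1) = (c, c, c.+1) /\ 3 * c + 1 = 64 ^ m.
Proof.
elim: m => [|m [c [Hc Hc3]]]; first by exists 0.
exists (64 * c + 21); split.
  rewrite mulnSr addnC iterD Hc d0_6; congr (_, _, _); lia.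
by rewrite expnS -Hc3; lia.
Qed.

Lemma two_pow p m : prime p -> p != 3 -> 2 ^ (6 * m) = 1 %[mod p] ->
  iter (6 * m) (ducci p) (0, 0, 1) = (0, 0, 1).
Proof.
move=> pp p3 H.
have p1 : 1 < p by apply: prime_gt1.
have -> : (0, 0, 1) = mod3 p (0, 0, 1) by rewrite /= mod0n modn_small.
rewrite iter_mod; have [c [-> Hc]] := d0_6m m.
have Hc' : 3 * c + 1 = 1 %[mod p] by rewrite Hc -H expnM.
have dc : p %| c.
  have : p %| 3 * c.
    move/eqP: Hc'; rewrite -[X in _ == X %[mod _]](add0n 1) eqn_modDr mod0n.
    by rewrite /dvdn.
  rewrite Gauss_dvdr //.
  by rewrite prime_coprime // dvdn_prime2 // eq_sym.
rewrite /= mod0n; move: (dc); rewrite /dvdn => /eqP ->.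
by rewrite -addn1 -modnDml (eqP dc) add0n modn_small.
Qed.

Lemma iter_mul p u N q : iter N (ducci p) u = u -> iter (q * N) (ducci p) u = u.
Proof.
move=> H; elim: q => [|q IH] //.
by rewrite mulSn iterD IH H.
Qed.

Lemma period_div p u N : 0 < N -> iter N (ducci p) u = u ->
  exists k, is_Per p u k /\ k %| N.
Proof.
move=> N0 HN.
pose P k := (0 < k) && (iter k (ducci p) u == u).
have exP : exists k, P k by exists N; rewrite /P N0 HN eqxx.
case: (ex_minnP exP) => k /andP [k0 /eqP Hk] Hmin.
have pure : forall k', eventual_period p u k' -> P k'.
  move=> k' [k'0 [l Hl]]; rewrite /P k'0 /=.
  have HL := iter_mul p u N l HN.
  have lL : l <= l * N by rewrite leq_pmulr.
  have := f_equal (iter (l * N - l) (ducci p)) Hl.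
  rewrite -!iterD addnA subnK // HL addnC iterD HL => ->. by [].
exists k; split; last first.
  have E := iter_mul p u k (N %/ k) Hk.
  have : iter (N %% k) (ducci p) u = u.
    by rewrite -{2}HN {2}(divn_eq N k) addnC iterD E.
  move=> Hr; case: (posnP (N %% k)) => [/eqP|r0]; first by rewrite -/(dvdn k N).
  have := Hmin _ (introT andP (conj r0 (introT eqP Hr))).
  by rewrite leqNgt ltn_pmod.
split; first by split => //; exists 0.
by move=> k' /pure; apply: Hmin.
Qed.

Lemma fermat2 p : prime p -> p != 2 -> 2 ^ p.-1 = 1 %[mod p].
Proof.
move=> pp p2.
have p1 : 1 < p by apply: prime_gt1.
have F := fermat_little 2 pp.
have cp : coprime p 2 by rewrite prime_coprime // dvdn_prime2.
apply/eqP; rewrite eqn_mod_dvd ?expn_gt0 //.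
rewrite -(Gauss_dvdr _ cp) mulnBr muln1 -expnS prednK ?prime_gt0 //.
rewrite -eqn_mod_dvd ?F //; by rewrite -{1}(expn1 2) leq_exp2l // prime_gt0.
Qed.

Theorem theorem4p4 (p : nat) (hp : prime p) :
  (p %% 6 = 1 -> exists k, is_P3 p k /\ k %| p.-1) /\
  (p %% 6 = 5 -> exists k, is_P3 p k /\ k %| 3 * p.-1).
Proof.
have p1 : 1 < p by apply: prime_gt1.
split=> H6.
- have p3 : p != 3 by apply/eqP=> E; rewrite E in H6.
  have p2 : p != 2 by apply/eqP=> E; rewrite E in H6.
  have Em : p.-1 = 6 * (p %/ 6) by rewrite {1}(divn_eq p 6) H6; lia.
  apply: period_div; first lia.
  rewrite Em; apply: two_pow => //; rewrite -Em; exact: fermat2.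
- have p3 : p != 3 by apply/eqP=> E; rewrite E in H6.
  have p2 : p != 2 by apply/eqP=> E; rewrite E in H6.
  have Em : 3 * p.-1 = 6 * (3 * (p %/ 6) + 2) by rewrite {1}(divn_eq p 6) H6; lia.
  apply: period_div; first lia.
  rewrite Em; apply: two_pow => //; rewrite -Em mulnC expnM.
  by rewrite -modnXm fermat2 // modnXm exp1n.
Qed.
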